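(* Let $0<1/n_0\ll\delta\ll 1$, and let $t,k,n\in\mathbb N$ with $n\geq n_0$ and $k^2-k+2\leq n\leq k^2+k+1$. Let $\mathcal H$ be an $n$-vertex hypergraph with codegree at most $t$ such that $|V(e)|\geq(1-\delta)\sqrt n$ for every edge $e$, and such that $\mathcal H$ has at most $t/(2\delta)$ edges of size at most $k$. If $e\in\mathcal H$ satisfies $|V(e)|\leq k$, then $|N(e)|\leq tn-3$.
   Context: Constant hierarchies: a statement holding whenever $0<a\ll b\le 1$ means there is a non-decreasing function $f:(0,1]\to(0,1]$ such that it holds for all $a,b$ with $a\leq f(b)$; constants are chosen from right to left. A hypergraph $\mathcal H$ has a finite vertex set $V(\mathcal H)$ and a finite set of edges, each edge $e$ with a nonempty set $V(e)\subseteq V(\mathcal H)$ (multiple edges allowed); $n$-vertex means $|V(\mathcal H)|=n$; the size of $e$ is $|V(e)|$. The codegree of $\mathcal H$ is the maximum over distinct vertices $u,v$ of the number of edges containing both. $N(e)$ is the set of edges $f\neq e$ with $V(e)\cap V(f)\neq\emptyset$. *)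

(* Defs.v *)
From mathcomp Require Import all_boot all_order all_algebra.
From mathcomp Require Import reals.
Set Implicit Arguments. Unset Strict Implicit. Unset Printing Implicit Defensive.
Import Order.TTheory GRing.Theory Num.Theory.

(* A hypergraph: finite vertex type V, finite edge index type E (multiple
   edges allowed), each edge e with a nonempty vertex set [vs e]. *)
Definition hyper_ok (V E : finType) (vs : E -> {set V}) : Prop :=
  forall e, vs e != set0.

Definition codeg_edges (V E : finType) (vs : E -> {set V}) (u v : V) : {set E} :=
  [set e | (u \in vs e) && (v \in vs e)].

Definition codegree_le (V E : finType) (vs : E -> {set V}) (t : nat) : Prop :=
  forall u v : V, u != v -> #|codeg_edges vs u v| <= t.

Definition nbhd (V E : finType) (vs : E -> {set V}) (e : E) : {set E} :=
  [set f | (f != e) && (vs e :&: vs f != set0)].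

(* Main.v *)
Require Import Defs.
From mathcomp Require Import all_boot all_order all_algebra.
From mathcomp Require Import reals.
From mathcomp Require Import ring lra zify.
Import Order.TTheory GRing.Theory Num.Theory.

Lemma step1 (V E : finType) (vs : E -> {set V}) t v :
  codegree_le vs t ->
  \sum_(f | v \in vs f) (#|vs f| - 1) <= t * (#|V| - 1).
Proof.
move=> Hc.
have -> : \sum_(f | v \in vs f) (#|vs f| - 1) =
          \sum_(f | v \in vs f) \sum_(u | u != v) (u \in vs f : nat).
  apply: eq_bigr => f Hf.
  rewrite (cardsD1 v (vs f)) Hf add1n subSS subn0.
  rewrite -sum1_card big_mkcond [RHS]big_mkcond /=. apply: eq_bigr => u _.
  by rewrite !inE andbC; case: (u \in vs f); case: (u != v).
rewrite (exchange_big_dep (fun u => u != v)) //=.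
apply: leq_trans (_ : \sum_(u | u != v) t <= _).
  apply: leq_sum => u Huv.
  apply: (leq_trans _ (Hc u v Huv)); rewrite /codeg_edges -sum1_card [X in _ <= X]big_mkcond /=.
  rewrite big_mkcond /=; apply: leq_sum => f _; rewrite inE.
  by rewrite Huv; case: (v \in vs f); case: (u \in vs f).
rewrite (eq_bigl (mem [set~ v])); last by move=> u; rewrite !inE.
by rewrite sum_nat_const cardsC1 mulnC subn1.
Qed.

Lemma comb (V E : finType) (vs : E -> {set V}) t e :
 codegree_le vs t ->
 \sum_(f in nbhd vs e) (#|vs f| - 1) + #|vs e| * (#|vs e| - 1)
   <= #|vs e| * (t * (#|V| - 1)).
Proof.
move=> Hc.
set w := fun f => (#|vs f| - 1).
have H1 : \sum_(f in nbhd vs e) w f <=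
   \sum_(v in vs e) \sum_(f | (v \in vs f) && (f != e)) w f.
  apply: (@leq_trans (\sum_(f | f != e) \sum_(v in vs e | v \in vs f) w f)).
    apply: (@leq_trans (\sum_(f in nbhd vs e) \sum_(v in vs e | v \in vs f) w f)).
      apply: leq_sum => f; rewrite inE => /andP [_ Hne].
      case/set0Pn: Hne => x; rewrite inE => /andP [Hx1 Hx2].
      by rewrite (bigD1 x) /= ?Hx1 ?Hx2 // leq_addr.
    rewrite [X in _ <= X](bigID (fun f => f \in nbhd vs e)) /=.
    apply: leq_trans (leq_addr _ _).
    rewrite [X in _ <= X]big_mkcond /= [X in X <= _]big_mkcond /=.
    apply: leq_sum => f _; rewrite inE.
    by case: (f != e); case: (_ != set0).
  rewrite (exchange_big_dep (fun v => v \in vs e)) /=; last by move=> f v _ /andP [].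
  apply: leq_sum => v _; rewrite [X in X <= _]big_mkcond [X in _ <= X]big_mkcond /=.
  by apply: leq_sum => f _; case: (f != e); case: (v \in vs e); case: (v \in vs f).
have H2 : \sum_(v in vs e) \sum_(f | (v \in vs f) && (f != e)) w f
          + #|vs e| * (#|vs e| - 1) <= #|vs e| * (t * (#|V| - 1)).
  rewrite -[X in _ + X <= _]sum_nat_const -[X in _ <= X]sum_nat_const -big_split /=.
  apply: leq_sum => v Hv.
  have := @step1 _ _ vs t v Hc.
  by rewrite (bigD1 e) //= addnC.
by apply: leq_trans H2; rewrite leq_add2r.
Qed.
Local Open Scope ring_scope.

Lemma realpart (R : realType) (d r k m t n L S W : R) :
  0 < d -> d <= 1/2 -> 0 <= r -> r * r = n -> 16 <= d * r ->
  2 * k - 1 <= 2 * r -> r <= k + 1 ->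
  (1 - d) * r <= m -> m <= k -> 0 <= t -> 0 <= L -> 0 <= S ->
  2 * d * S <= t ->
  k * L + ((1 - d) * r - 1) * S <= W ->
  W + m * (m - 1) <= m * (t * (n - 1)) ->
  L + S <= t * n - 3.
Proof.
move=> d0 d1 r0 rn dr kr rk sm mk t0 L0 S0 St LW Wm.
have r32 : 32 <= r by nra.
have c1 : k - (1 - d) * r + 1 <= 2 * d * k by nra.
have c2 : (k - (1 - d) * r + 1) * S <= k * t.
  have [h|h] := lerP 0 (k - (1 - d) * r + 1); last by nra.
  have : (k - (1 - d) * r + 1) * S <= 2 * d * k * S by apply: ler_wpM2r.
  have : k * (2 * d * S) <= k * t by apply: ler_wpM2l => //; nra.
  lra.
have n1 : 1 <= n by nra.
have c3 : m * (t * (n - 1)) <= k * (t * (n - 1)).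
  apply: ler_wpM2r => //; nra.
have s2 : r / 2 <= m by nra.
have c5 : (r/2) * (r/2 - 1) <= m * (m - 1) by nra.
have c4 : 3 * k <= m * (m - 1) by nra.
have k0 : 0 < k by nra.
have : k * (L + S) <= k * (t * n - 3) by nra.
by rewrite ler_pM2l.
Qed.

Theorem proposition4p5 (R : realType) :
  exists delta0 : R, 0 < delta0 <= 1 /\
  exists f : R -> R,
    (forall x, 0 < x <= 1 -> 0 < f x <= 1) /\
    (forall x y, 0 < x <= y -> y <= 1 -> f x <= f y) /\
  forall delta : R, 0 < delta <= delta0 ->
  forall n0 : nat, (0 < n0)%N -> (n0%:R)^-1 <= f delta ->
  forall (t k n : nat), (n0 <= n)%N ->
    (k * k - k + 2 <= n)%N -> (n <= k * k + k + 1)%N ->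
  forall (V E : finType) (vs : E -> {set V}),
    #|V| = n -> hyper_ok vs ->
    codegree_le vs t ->
    (forall e, (1 - delta) * Num.sqrt (n%:R) <= (#|vs e|)%:R) ->
    (#|[set e | (#|vs e| <= k)%N]|)%:R <= t%:R / (2 * delta) ->
  forall e : E, (#|vs e| <= k)%N ->
    (#|nbhd vs e|)%:R <= (t * n)%:R - 3 :> R.
Proof.
exists (1/2); split; first by apply/andP; split; lra.
exists (fun x => x ^+ 2 / 256); split.
  move=> x /andP [x0 x1]; apply/andP; split; first by nra.
  by nra.
split.
  move=> x y /andP [x0 xy] y1; nra.
move=> d /andP [d0 d1] n0 n0pos n0f t k n n0n kn nk V E vs Vn _ Hc Hsz Hsm e Hek.
set r := Num.sqrt (n%:R : R).
have r0 : 0 <= r by apply: sqrtr_ge0.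
have rn : r * r = n%:R by rewrite -expr2 sqr_sqrtr // ler0n.
have n0R : 0 < (n0%:R : R) by rewrite ltr0n.
have n0nR : (n0%:R : R) <= n%:R by rewrite ler_nat.
have hinv : (n0%:R : R) * (n0%:R)^-1 = 1 by rewrite mulfV // gt_eqF.
have dn : 256 <= d ^+ 2 * n%:R.
  set x := (n0%:R : R)^-1 in n0f hinv.
  have h1 : 0 <= n0%:R * (d ^+ 2 / 256 - x) by apply: mulr_ge0; lra.
  have h2 : 0 <= (n%:R - n0%:R) * d ^+ 2 by apply: mulr_ge0; [lra | nra].
  nra.
have dr : 16 <= d * r.
  have e1 : (d * r) * (d * r) = d ^+ 2 * n%:R by rewrite -rn; ring.
  have dr0 : 0 <= d * r by apply: mulr_ge0; lra.
  set p := d * r in e1 dr0 *; nra.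
have kn' : (k * k + 2 <= n + k)%N by lia.
have nk' : (n <= k * k + k + 1)%N by lia.
have knR : (k%:R : R) * k%:R + 2 <= n%:R + k%:R.
  by move: kn'; rewrite -(ler_nat R) !natrD natrM.
have nkR : (n%:R : R) <= k%:R * k%:R + k%:R + 1.
  by move: nk'; rewrite -(ler_nat R) !natrD natrM.
have k0 : (0 : R) <= k%:R by rewrite ler0n.
have kr : 2 * (k%:R : R) - 1 <= 2 * r by nra.
have rk : r <= k%:R + 1 by nra.
have fpos : forall f, (0 < #|vs f|)%N.
  move=> f; have := Hsz f; rewrite -/r => h.
  by rewrite -(ltr0n R); nra.
set N := nbhd vs e.
set Lg := [set f | (k < #|vs f|)%N].
set W := \sum_(f in N) ((#|vs f|)%:R - 1 : R).
have HW : W = (\sum_(f in N) (#|vs f| - 1))%:R.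
  rewrite natr_sum; apply: eq_bigr => f _; rewrite natrB //; exact: fpos.
have Hcomb := @comb _ _ vs t e Hc.
rewrite -/N Vn in Hcomb.
have Wm : W + #|vs e|%:R * (#|vs e|%:R - 1) <= #|vs e|%:R * (t%:R * (n%:R - 1)).
  have mpos := fpos e.
  have npos : (0 < n)%N by apply: leq_trans n0n.
  by move: Hcomb; rewrite -(ler_nat R) natrD !natrM !natrB // -HW.
have LW : k%:R * #|N :&: Lg|%:R + ((1 - d) * r - 1) * #|N :\: Lg|%:R <= W.
  rewrite /W (big_setID Lg) /=; apply: lerD.
    rewrite mulr_natr -sumr_const; apply: ler_sum => f.
    rewrite in_setI => /andP [_]; rewrite inE => h.
    have : ((k.+1)%:R : R) <= #|vs f|%:R by rewrite ler_nat.
    rewrite -addn1 natrD.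
    lra.
  rewrite mulr_natr -sumr_const; apply: ler_sum => f _.
  have := Hsz f; rewrite -/r; lra.
have St : 2 * d * #|N :\: Lg|%:R <= t%:R.
  have h : (#|N :\: Lg| <= #|[set e | (#|vs e| <= k)%N]|)%N.
    apply: subset_leq_card; apply/subsetP => f; rewrite in_setD => /andP [].
    by rewrite !inE -leqNgt.
  have h' : (#|N :\: Lg|%:R : R) <= #|[set e | (#|vs e| <= k)%N]|%:R by rewrite ler_nat.
  move: Hsm; rewrite ler_pdivlMr; last by lra.
  nra.
have mk : (#|vs e|%:R : R) <= k%:R by rewrite ler_nat.
rewrite -(cardsID Lg N) natrD natrM.
apply: (@realpart R d r k%:R #|vs e|%:R t%:R n%:R _ _ W) => //.
all: try by rewrite ler0n.

Qed.
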